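(* $b\underline{\mathcal D}=b\overline{\mathcal D}=\overline{\mathcal{BD}}$.
   Context: $\mathbb N$ denotes the positive integers. For $A\subseteq\mathbb N$: lower density $\underline d(A)=\liminf_n \#\{k\le n:k\in A\}/n$, upper density $\overline d(A)=\limsup_n \#\{k\le n:k\in A\}/n$, upper Banach density $\overline{Bd}(A)=\lim_n\sup_k \#(A\cap[k,k+n])/n$. $\underline{\mathcal D}=\{A:\underline d(A)>0\}$, $\overline{\mathcal D}=\{A:\overline d(A)>0\}$, $\overline{\mathcal{BD}}=\{A:\overline{Bd}(A)>0\}$. For a family $\mathcal F$ of subsets of $\mathbb N$, the block family $b\mathcal F$ is defined by: $S\in b\mathcal F$ iff there is $F\in\mathcal F$ such that for every finite $R\subseteq F$ there is $n\in\mathbb N$ with $R+n=\{r+n:r\in R\}\subseteq S$. *)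

(* Defs.v *)
From Stdlib Require Import Reals List.
From Coquelicot Require Import Coquelicot.
Open Scope R_scope.

(* A subset of the positive integers is a boolean predicate on nat that is
   false at 0 (see [positive_set]). *)
Definition nset := nat -> bool.

Definition positive_set (A : nset) : Prop := forall k, A k = true -> (0 < k)%nat.

Fixpoint cnt (A : nset) (a len : nat) : nat :=
  match len with
  | O => O
  | S l => ((if A (a + l)%nat then 1 else 0) + cnt A a l)%nat
  end.

Definition dens_seq (A : nset) (n : nat) : R := INR (cnt A 1 n) / INR n.

Definition lower_density (A : nset) : Rbar := LimInf_seq (dens_seq A).
Definition upper_density (A : nset) : Rbar := LimSup_seq (dens_seq A).

(* sup_{k in N+} #(A ∩ [k, k+n]) / n ; [k,k+n] has n+1 elements *)
Definition banach_seq (A : nset) (n : nat) : R :=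
  real (Sup_seq (fun k => INR (cnt A (S k) (S n)) / INR n)).

Definition upper_banach_density (A : nset) : Rbar := Lim_seq (banach_seq A).

Definition Dlow (A : nset) : Prop := positive_set A /\ Rbar_lt 0 (lower_density A).
Definition Dup (A : nset) : Prop := positive_set A /\ Rbar_lt 0 (upper_density A).
Definition BDup (A : nset) : Prop :=
  positive_set A /\ Rbar_lt 0 (upper_banach_density A).

Definition block (F : nset -> Prop) (S : nset) : Prop :=
  exists A : nset, F A /\
    forall R : list nat, (forall r, In r R -> A r = true) ->
      exists n : nat, (0 < n)%nat /\ forall r, In r R -> S (r + n)%nat = true.

(* Main.v *)
Require Import Defs.
From Stdlib Require Import Reals List Lia Lra ClassicalEpsilon Classical.
From Coquelicot Require Import Coquelicot.
Open Scope R_scope.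

Lemma cnt_S A a l : cnt A a (S l) = ((if A (a + l)%nat then 1 else 0) + cnt A a l)%nat.
Proof. reflexivity. Qed.

Lemma cnt_add A a l1 l2 : cnt A a (l1 + l2) = (cnt A a l1 + cnt A (a + l1) l2)%nat.
Proof.
  induction l2 as [|l2 IH].
  - rewrite Nat.add_0_r; simpl; lia.
  - rewrite Nat.add_succ_r, !cnt_S, IH.
    replace (a + (l1 + l2))%nat with (a + l1 + l2)%nat by lia. lia.
Qed.

Lemma cnt_le A a l : (cnt A a l <= l)%nat.
Proof. induction l; simpl; [lia|destruct (A (a+l)%nat); lia]. Qed.

Lemma cnt_mono A B a b l :
  (forall i, (i < l)%nat -> A (a + i)%nat = true -> B (b + i)%nat = true) ->
  (cnt A a l <= cnt B b l)%nat.
Proof.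
  induction l as [|l IH]; intros H; simpl; [lia|].
  assert (IH' := IH (fun i Hi => H i (Nat.lt_lt_succ_r _ _ Hi))).
  specialize (H l (Nat.lt_succ_diag_r l)).
  destruct (A (a+l)%nat); [rewrite H by auto|destruct (B (b+l)%nat)]; lia.
Qed.

Lemma cnt_ext A B a b l :
  (forall i, (i < l)%nat -> A (a + i)%nat = B (b + i)%nat) ->
  cnt A a l = cnt B b l.
Proof.
  intros H; apply Nat.le_antisymm; apply cnt_mono; intros i Hi E;
  rewrite <- E; [symmetry|]; auto.
Qed.

Lemma cnt_len_mono A a l l' : (l <= l')%nat -> (cnt A a l <= cnt A a l')%nat.
Proof.
  intros H. replace l' with (l + (l' - l))%nat by lia. rewrite cnt_add. lia.
Qed.

Lemma block_bound T p X : (0 < p)%nat ->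
  (forall k, INR (cnt T (S k) p) <= X) ->
  forall l a, (1 <= a)%nat -> INR (cnt T a l) <= (INR l / INR p + 1) * X.
Proof.
  intros Hp HX.
  assert (X0 : 0 <= X) by (eapply Rle_trans; [apply pos_INR|apply (HX O)]).
  assert (Pp : 0 < INR p) by (apply lt_0_INR; auto).
  intros l; induction l as [l IH] using (well_founded_induction Wf_nat.lt_wf).
  intros a Ha.
  destruct (Nat.lt_ge_cases l p) as [Hl|Hl].
  - apply Rle_trans with X.
    + apply Rle_trans with (INR (cnt T a p)).
      * apply le_INR, cnt_len_mono; lia.
      * replace a with (S (a - 1)) by lia; apply HX.
    + assert (0 <= INR l / INR p) by (apply Rdiv_le_0_compat; [apply pos_INR|auto]).
      nra.
  - replace l with (p + (l - p))%nat by lia. rewrite cnt_add, plus_INR.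
    assert (H1 : INR (cnt T a p) <= X) by (replace a with (S (a - 1)) by lia; apply HX).
    assert (H2 := IH (l - p)%nat ltac:(lia) (a + p)%nat ltac:(lia)).
    replace (INR (p + (l - p))) with (INR p + INR (l - p)) by (rewrite plus_INR; auto).
    replace ((INR p + INR (l - p)) / INR p + 1) with ((INR (l - p)/ INR p + 1) + 1)
      by (field; lra).
    lra.
Qed.

Lemma arch r : exists n : nat, r < INR n.
Proof.
  exists (Z.to_nat (up r)). destruct (archimed r) as [H _].
  rewrite INR_IZR_INZ. apply Rlt_le_trans with (1 := H). apply IZR_le. lia.
Qed.

Lemma sup_ub (u : nat -> R) B k : (forall k, u k <= B) ->
  u k <= real (Sup_seq (fun k => Finite (u k))).
Proof.
  intros HB.
  assert (H1 : Rbar_le (u k) (Sup_seq (fun k => Finite (u k))))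
    by (apply Sup_seq_minor_le with k; simpl; lra).
  assert (H2 : Rbar_le (Sup_seq (fun k => Finite (u k))) B).
  { apply Rbar_not_lt_le; intros H. apply Sup_seq_minor_lt in H.
    destruct H as [n Hn]; simpl in Hn; specialize (HB n); lra. }
  destruct (Sup_seq (fun k => Finite (u k))); simpl in *; tauto.
Qed.

Lemma sup_le (u : nat -> R) B : (forall k, u k <= B) -> 0 <= B ->
  real (Sup_seq (fun k => Finite (u k))) <= B.
Proof.
  intros HB B0.
  assert (H2 : Rbar_le (Sup_seq (fun k => Finite (u k))) B).
  { apply Rbar_not_lt_le; intros H. apply Sup_seq_minor_lt in H.
    destruct H as [n Hn]; simpl in Hn; specialize (HB n); lra. }
  destruct (Sup_seq (fun k => Finite (u k))); simpl in *; tauto.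
Qed.

Lemma Rbar_pos_below x : Rbar_lt 0 x -> exists b, 0 < b /\ Rbar_lt b x.
Proof.
  destruct x as [r| |]; simpl; intros H.
  - exists (r/2); split; lra.
  - exists 1; split; [lra|exact I].
  - contradiction.
Qed.

Lemma argmin (f : nat -> R) M : exists p, (p <= M)%nat /\ forall q, (q <= M)%nat -> f p <= f q.
Proof.
  induction M as [|M [p [Hp H]]].
  - exists O; split; [lia|]; intros q Hq; replace q with O by lia; lra.
  - destruct (Rle_lt_dec (f p) (f (S M))) as [h|h].
    + exists p; split; [lia|]. intros q Hq.
      destruct (Nat.eq_dec q (S M)); [subst; auto|apply H; lia].
    + exists (S M); split; [lia|]. intros q Hq.
      destruct (Nat.eq_dec q (S M)); [subst; lra|].
      specialize (H q ltac:(lia)); lra.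
Qed.

Lemma good_window T c : 0 < c ->
  (forall M, (1 <= M)%nat -> exists k, c * INR M <= INR (cnt T (S k) M)) ->
  forall N, exists s, (1 <= s)%nat /\
    forall L, (L <= N)%nat -> c / 2 * INR L <= INR (cnt T s L).
Proof.
  intros Hc HM N.
  destruct (arch (2 * INR N / c)) as [M0 HM0].
  set (M := S M0).
  assert (HMM : 2 * INR N / c < INR M) by (unfold M; rewrite S_INR; lra).
  destruct (HM M ltac:(unfold M; lia)) as [k Hk].
  set (a := S k).
  set (h := fun p => INR (cnt T a p) - c / 2 * INR p).
  destruct (argmin h M) as [p0 [Hp0 Hmin]].
  exists (a + p0)%nat; split; [unfold a; lia|].
  assert (Hsplit : forall L, INR (cnt T a (p0 + L)) = INR (cnt T a p0) + INR (cnt T (a + p0) L))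
    by (intros L; rewrite cnt_add, plus_INR; auto).
  assert (HNM : INR N <= INR (M - p0)).
  { assert (h1 := Hmin O ltac:(lia)). assert (h2 := Hmin M ltac:(lia)).
    unfold h in h1, h2. simpl in h1.
    assert (Hk' : c * INR M <= INR (cnt T a M)) by exact Hk.
    assert (EM : cnt T a M = cnt T a (p0 + (M - p0))) by (f_equal; lia).
    rewrite EM, Hsplit in h2, Hk'.
    assert (h3 := le_INR _ _ (cnt_le T (a + p0) (M - p0))).
    rewrite minus_INR in * by lia.
    assert (h4 : INR N < c / 2 * INR M).
    { apply Rmult_lt_compat_l with (r := c / 2) in HMM; [|lra].
      replace (c / 2 * (2 * INR N / c)) with (INR N) in HMM by (field; lra). lra. }
    assert (c / 2 * INR p0 <= c / 2 * INR M) by (apply Rmult_le_compat_l; [lra|apply le_INR; lia]). lra. }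
  intros L HL.
  assert (HL' : (p0 + L <= M)%nat).
  { apply INR_le. rewrite minus_INR in HNM by lia. apply le_INR in HL.
    rewrite plus_INR. lra. }
  assert (h1 := Hmin (p0 + L)%nat HL'). unfold h in h1.
  rewrite Hsplit, plus_INR in h1. lra.
Qed.

Definition Pg (c : R) (T : nset) (N n : nat) : Prop :=
  (1 <= n)%nat /\ forall L, (L <= N)%nat -> c / 2 * INR (S L) <= 1 + INR (cnt T (S n) L).

Lemma Pg_mono c T N N' n : (N' <= N)%nat -> Pg c T N n -> Pg c T N' n.
Proof. intros H [H1 H2]; split; auto. intros L HL; apply H2; lia. Qed.

Lemma Pg_exists T c : 0 < c ->
  (forall M, (1 <= M)%nat -> exists k, c * INR M <= INR (cnt T (S k) M)) ->
  forall N, exists n, Pg c T N n.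
Proof.
  intros Hc HM N. destruct (good_window T c Hc HM (S N)) as [s [Hs H]].
  exists s; split; auto. intros L HL.
  specialize (H (S L) ltac:(lia)).
  replace (S L) with (1 + L)%nat in H at 2 by lia.
  rewrite cnt_add, plus_INR in H.
  assert (h := le_INR _ _ (cnt_le T s 1)).
  replace (s + 1)%nat with (S s) in H by lia. change (INR 1) with 1 in h. lra.
Qed.

Definition Ext c T m (w : nat -> bool) : Prop :=
  forall N, exists n, Pg c T N n /\ forall r, (1 <= r <= m)%nat -> w r = T (r + n)%nat.

Definition upd (w : nat -> bool) m b : nat -> bool := fun r => if Nat.eqb r m then b else w r.

Lemma Ext_step c T m w : Ext c T m w ->
  Ext c T (S m) (upd w (S m) true) \/ Ext c T (S m) (upd w (S m) false).
Proof.
  intros HE. apply NNPP; intros Hn. apply not_or_and in Hn. destruct Hn as [H1 H0].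
  unfold Ext in H1, H0. apply not_all_ex_not in H1, H0.
  destruct H1 as [N1 H1], H0 as [N0 H0].
  destruct (HE (Nat.max N0 N1)) as [n [HP Ha]].
  assert (Hag : forall b, T (S m + n)%nat = b ->
      forall r, (1 <= r <= S m)%nat -> upd w (S m) b r = T (r + n)%nat).
  { intros b Hb r Hr. unfold upd. destruct (Nat.eqb_spec r (S m)).
    - subst; auto.
    - apply Ha; lia. }
  destruct (T (S m + n)%nat) eqn:E.
  - apply H1. exists n. split; [apply Pg_mono with (2 := HP); lia|apply Hag; auto].
  - apply H0. exists n. split; [apply Pg_mono with (2 := HP); lia|apply Hag; auto].
Qed.

Fixpoint preW c T m : nat -> bool :=
  match m with
  | O => fun _ => false
  | S m' => if excluded_middle_informative (Ext c T m (upd (preW c T m') m true))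
            then upd (preW c T m') m true else upd (preW c T m') m false
  end.

Lemma pre_ext c T : (forall N, exists n, Pg c T N n) -> forall m, Ext c T m (preW c T m).
Proof.
  intros H0 m. induction m as [|m IH].
  - intros N. destruct (H0 N) as [n Hn]. exists n; split; auto. intros r Hr; lia.
  - simpl. destruct (excluded_middle_informative _) as [e|e]; auto.
    destruct (Ext_step _ _ _ _ IH); tauto.
Qed.

Lemma pre_stable c T r d : preW c T (r + d) r = preW c T r r.
Proof.
  induction d as [|d IH]; [now rewrite Nat.add_0_r|].
  rewrite Nat.add_succ_r. simpl.
  destruct (excluded_middle_informative _); unfold upd;
  destruct (Nat.eqb_spec r (S (r + d))); try lia; auto.
Qed.

Lemma dlow_dup T : block Dlow T -> block Dup T.
Proof.
  intros [A [[HA Hd] HB]]. exists A; split; auto. split; auto.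
  eapply Rbar_lt_le_trans; [exact Hd|apply LimSup_LimInf_seq_le].
Qed.

Lemma translate_cnt A T L :
  positive_set A ->
  (forall R : list nat, (forall r, In r R -> A r = true) ->
      exists n : nat, (0 < n)%nat /\ forall r, In r R -> T (r + n)%nat = true) ->
  exists n, (cnt A 1 L <= cnt T (1 + n) L)%nat.
Proof.
  intros HA HB.
  destruct (HB (filter A (seq 1 L))) as [n [Hn Hr]].
  { intros r Hr; apply filter_In in Hr; tauto. }
  exists n. apply cnt_mono. intros i Hi Ai.
  replace (1 + n + i)%nat with ((1 + i) + n)%nat by lia. apply Hr.
  apply filter_In; split; auto. apply in_seq; lia.
Qed.

Lemma dup_bd T : positive_set T -> block Dup T -> BDup T.
Proof.
  intros HT [A [[HA Hd] HB]]. split; auto.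
  destruct (Rbar_pos_below _ Hd) as [b [Hb Hbd]].
  assert (Hinf : forall N0, exists L, (N0 <= L)%nat /\ b < dens_seq A L).
  { intros N0. apply NNPP; intros Hn.
    assert (Hev : eventually (fun L => dens_seq A L <= b)).
    { exists N0. intros L HL. apply Rnot_lt_le. intros H. apply Hn. exists L; auto. }
    apply LimSup_le in Hev. rewrite LimSup_seq_const in Hev.
    unfold upper_density in Hbd.
    assert (Rbar_lt b b) by (eapply Rbar_lt_le_trans; eauto). simpl in H; lra. }
  assert (Hwin : forall m, (1 <= m)%nat -> exists k, b / 2 * INR (S m) <= INR (cnt T (S k) (S m))).
  { intros m Hm. apply NNPP; intros Hn.
    assert (HX : forall k, INR (cnt T (S k) (S m)) <= b / 2 * INR (S m)).
    { intros k. apply Rnot_lt_le; intros H. apply Hn. exists k; lra. }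
    assert (HBB := block_bound T (S m) _ ltac:(lia) HX).
    destruct (Hinf (S (S m))) as [L [HL HdL]].
    destruct (translate_cnt A T L HA HB) as [n Hn'].
    specialize (HBB L (1 + n)%nat ltac:(lia)).
    apply le_INR in Hn'.
    unfold dens_seq in HdL.
    assert (PL : 0 < INR L) by (apply lt_0_INR; lia).
    assert (PM : 0 < INR (S m)) by (apply lt_0_INR; lia).
    apply Rmult_lt_compat_r with (r := INR L) in HdL; auto.
    replace (INR (cnt A 1 L) / INR L * INR L) with (INR (cnt A 1 L)) in HdL by (field; lra).
    replace ((INR L / INR (S m) + 1) * (b / 2 * INR (S m))) with (b / 2 * INR L + b / 2 * INR (S m))
      in HBB by (field; lra).
    apply le_INR in HL.
    assert (b * INR (S (S m)) <= b * INR L) by (apply Rmult_le_compat_l; lra).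
    rewrite S_INR with (n := S m) in H. lra. }
  assert (Hban : forall m, (1 <= m)%nat -> b / 2 <= banach_seq T m).
  { intros m Hm. destruct (Hwin m Hm) as [k Hk].
    assert (PM : 0 < INR m) by (apply lt_0_INR; lia).
    unfold banach_seq.
    eapply Rle_trans; [|apply (sup_ub (fun k => INR (cnt T (S k) (S m)) / INR m) (INR (S m) / INR m) k)].
    - apply Rmult_le_reg_r with (INR m); auto.
      replace (INR (cnt T (S k) (S m)) / INR m * INR m) with (INR (cnt T (S k) (S m))) by (field; lra).
      rewrite S_INR in Hk. nra.
    - intros j. apply Rmult_le_compat_r; [left; apply Rinv_0_lt_compat; auto|].
      apply le_INR, cnt_le. }
  assert (Hle : Rbar_le (Lim_seq (fun _ => b / 2)) (Lim_seq (banach_seq T))).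
  { apply Lim_seq_le_loc. exists 1%nat. intros; apply Hban; auto. }
  rewrite Lim_seq_const in Hle. unfold upper_banach_density.
  eapply Rbar_lt_le_trans; [|exact Hle]. simpl; lra.
Qed.

Lemma bd_dlow T : BDup T -> block Dlow T.
Proof.
  intros [HT Hbd].
  destruct (Rbar_pos_below _ Hbd) as [b [Hb Hbl]].
  set (c := b / 3).
  assert (Hc : 0 < c) by (unfold c; lra).
  assert (Hwin : forall M, (1 <= M)%nat -> exists k, c * INR M <= INR (cnt T (S k) M)).
  { intros M HM. apply NNPP; intros Hn.
    assert (HX : forall k, INR (cnt T (S k) M) <= c * INR M).
    { intros k. apply Rnot_lt_le; intros H. apply Hn. exists k; lra. }
    assert (HBB := block_bound T M _ ltac:(lia) HX).
    assert (PM : 0 < INR M) by (apply lt_0_INR; lia).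
    assert (Hban : forall n, (S M <= n)%nat -> banach_seq T n <= 2 * c).
    { intros n Hn'.
      assert (Pn : 0 < INR n) by (apply lt_0_INR; lia).
      unfold banach_seq. apply Rle_trans with ((c * INR (S n) + c * INR M) / INR n).
      - apply sup_le.
        + intros k. apply Rmult_le_compat_r; [left; apply Rinv_0_lt_compat; auto|].
          specialize (HBB (S n) (S k) ltac:(lia)).
          replace ((INR (S n) / INR M + 1) * (c * INR M)) with (c * INR (S n) + c * INR M)
            in HBB by (field; lra). exact HBB.
        + apply Rdiv_le_0_compat; auto. assert (0 <= INR (S n)) by apply pos_INR. nra.
      - apply Rmult_le_reg_r with (INR n); auto.
        replace ((c * INR (S n) + c * INR M) / INR n * INR n) with (c * INR (S n) + c * INR M)
          by (field; lra).
        apply le_INR in Hn'. rewrite S_INR in *. nra. }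
    assert (Hle : Rbar_le (Lim_seq (banach_seq T)) (Lim_seq (fun _ => 2 * c))).
    { apply Lim_seq_le_loc. exists (S M). intros; apply Hban; auto. }
    rewrite Lim_seq_const in Hle. unfold upper_banach_density in Hbl.
    assert (Rbar_lt b (2 * c)) by (eapply Rbar_lt_le_trans; eauto).
    simpl in H. unfold c in H. lra. }
  assert (H0 := Pg_exists T c Hc Hwin).
  assert (HE := pre_ext c T H0).
  set (A := fun r => preW c T r r).
  assert (Hst : forall r m, (r <= m)%nat -> preW c T m r = A r).
  { intros r m Hrm. unfold A. replace m with (r + (m - r))%nat by lia. apply pre_stable. }
  assert (HA : positive_set A).
  { intros k Hk. destruct k; [discriminate|lia]. }
  exists A. split.
  - split; auto.
    assert (Hd : forall L, c / 2 * INR (S L) <= 1 + INR (cnt A 1 L)).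
    { intros L. destruct (HE L L) as [n [[Hn1 HP] Hag]].
      replace (cnt A 1 L) with (cnt T (S n) L).
      - apply HP; lia.
      - apply cnt_ext. intros i Hi. rewrite <- Hst with (m := L) by lia.
        rewrite Hag by lia. f_equal; lia. }
    destruct (arch (4 / c)) as [N1 HN1].
    assert (Hev : eventually (fun L => c / 4 <= dens_seq A L)).
    { exists (S N1). intros L HL. unfold dens_seq.
      assert (PL : 0 < INR L) by (apply lt_0_INR; lia).
      apply Rmult_le_reg_r with (INR L); auto.
      replace (INR (cnt A 1 L) / INR L * INR L) with (INR (cnt A 1 L)) by (field; lra).
      specialize (Hd L). rewrite S_INR in Hd.
      apply le_INR in HL. rewrite S_INR in HL.
      assert (c * INR N1 > 4) by (apply Rmult_lt_compat_l with (r := c) in HN1; auto;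
        replace (c * (4 / c)) with 4 in HN1 by (field; lra); lra).
      nra. }
    apply LimInf_le in Hev. rewrite LimInf_seq_const in Hev.
    unfold lower_density. eapply Rbar_lt_le_trans; [|exact Hev]. simpl; lra.
  - intros R HR.
    destruct (HE (list_max R) (list_max R)) as [n [[Hn1 _] Hag]].
    exists n; split; [lia|]. intros r Hr.
    assert (r1 : (1 <= r)%nat) by (apply HA, HR, Hr).
    assert (r2 : (r <= list_max R)%nat).
    { assert (H := proj1 (list_max_le R (list_max R)) (le_n _)).
      rewrite Forall_forall in H. auto. }
    rewrite <- Hag by lia. rewrite Hst by lia. auto.
Qed.

Theorem mainTheorem2 :
  forall S : nset, positive_set S ->
    (block Dlow S <-> block Dup S) /\ (block Dup S <-> BDup S).
Proof.
  intros T HT. split; split.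
  - apply dlow_dup.
  - intros H. apply bd_dlow, dup_bd; auto.
  - apply dup_bd; auto.
  - intros H. apply dlow_dup, bd_dlow; auto.
Qed.
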